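(* Let $S$ be a $\Sigma_1$-sequent, $H=(H_1,\dots,H_q)$ a Herbrand structure of $S$, $D=(U_1,\dots,U_q)\circ W$ a decomposition of $H$ with variables $\alpha_1,\dots,\alpha_n$ and $W=\{\bar w_1,\dots,\bar w_k\}$, and let $S^\sim$ be the schematic extended Herbrand sequent of $S$ with respect to $D$. Then the canonical substitution $[X\backslash \lambda\bar\alpha.\,C(S^\sim)]$ is a solution of $S^\sim$, i.e. $$C(S^\sim)(\bar\alpha)\to\bigwedge_{i=1}^k C(S^\sim)(\bar w_i),\ \mathcal F'_1,\dots,\mathcal F'_p\vdash \mathcal F'_{p+1},\dots,\mathcal F'_q$$ is a quasi-tautology.
   Context: We work in first-order predicate logic with equality. A $\Sigma_1$-sequent is a sequent $S$ of the form $\forall\bar x_1 F_1,\dots,\forall\bar x_p F_p\vdash\exists\bar x_{p+1}F_{p+1},\dots,\exists\bar x_q F_q$, where each $F_i$ is quantifier-free and $\bar x_i$ is a block of $k_i\ge 0$ variables. A sequent is E-valid if it is valid in predicate logic with equality (a quantifier-free formula or sequent with free variables is called E-valid if its universal closure is); a quasi-tautology is a quantifier-free E-valid sequent. A Herbrand structure of $S$ is a tuple $H=(H_1,\dots,H_q)$, $H_i$ a finite set of $k_i$-vectors of ground terms, such that, with $\mathcal F_i=\{F_i[\bar x_i\backslash\bar t]:\bar t\in H_i\}$ if $k_i>0$ and $\mathcal F_i=\{F_i\}$ if $k_i=0$, the sequent $\mathcal F_1\cup\dots\cup\mathcal F_p\vdash\mathcal F_{p+1}\cup\dots\cup\mathcal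 F_q$ is a quasi-tautology. A decomposition of $H$ is a pair $D=(U_1,\dots,U_q)\circ W$ where, for fresh variables $\bar\alpha=(\alpha_1,\dots,\alpha_n)$, each $U_i$ is a finite set of $k_i$-vectors of terms possibly containing the $\alpha_j$, and $W=\{\bar w_1,\dots,\bar w_k\}$ is a finite set of $n$-vectors of ground terms not containing any $\alpha_j$, such that $H_i=\{u[\bar\alpha\backslash\bar w]:u\in U_i,\bar w\in W\}$ for every $i$ with $k_i>0$. Put $\mathcal F'_i=\{F_i[\bar x_i\backslash\bar t]:\bar t\in U_i\}$ if $k_i>0$ and $\mathcal F'_i=\{F_i\}$ if $k_i=0$. For an $n$-place predicate variable $X$, the schematic extended Herbrand sequent of $S$ w.r.t. $D$ is $$S^\sim:\ X\bar\alpha\to\bigwedge_{i=1}^k X\bar w_i,\ \mathcal F'_1,\dots,\mathcal F'_p\vdash\mathcal F'_{p+1},\dots,\mathcal F'_q.$$ For a quantifier-free formula $A$ whose free variables are among $\alpha_1,\dots,\alpha_n$, the second-order substitution $[X\backslash\lambda\bar\alpha.A]$ is a solution of $S^\sim$ if $S^\sim[X\backslash\lambda\bar\alpha.A]$ is a quasi-tautology. Let $F[l]$ be the conjunction of all formulas in $\mathcal F'_1\cup\dots\cup\mathcal F'_p$ and $F[r]$ the disjunction of all formulas in $\mathcal F'_{p+1}\cup\dots\cup\mathcal F'_q$. The canonical formula is $C(S^\sim)=F[l]\wedge\neg F[r]$ (a formula in $\bar\alpha$), and $[X\backslash\lambda\bar\alpha.C(S^\sim)]$ is the canonical substitution; $C(S^\sim)(\bar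 t)$ denotes $C(S^\sim)[\bar\alpha\backslash\bar t]$. *)

(* Defs.v *)
From Stdlib Require Import List Arith.
Import ListNotations.

Section FOL.
Context {Fn Pr : Type}.  (* function symbols (constants = 0-ary) and predicate symbols *)

Inductive term : Type :=
| Var : nat -> term
| App : Fn -> list term -> term.

Fixpoint tvars (t : term) : list nat :=
  match t with
  | Var x => [x]
  | App _ l => concat (map tvars l)
  end.

Definition ground (t : term) : Prop := tvars t = [].

Fixpoint tsubst (s : nat -> term) (t : term) : term :=
  match t with
  | Var x => s x
  | App f l => App f (map (tsubst s) l)
  end.

Inductive formula : Type :=
| FTop : formula
| FBot : formula
| Atom : Pr -> list term -> formula
| Equ : term -> term -> formula
| Neg : formula -> formula
| Conj : formula -> formula -> formula
| Disj : formula -> formula -> formula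
| Impl : formula -> formula -> formula.

Fixpoint fvars (A : formula) : list nat :=
  match A with
  | FTop | FBot => []
  | Atom _ l => concat (map tvars l)
  | Equ t u => tvars t ++ tvars u
  | Neg B => fvars B
  | Conj B C | Disj B C | Impl B C => fvars B ++ fvars C
  end.

Fixpoint fsubst (s : nat -> term) (A : formula) : formula :=
  match A with
  | FTop => FTop
  | FBot => FBot
  | Atom p l => Atom p (map (tsubst s) l)
  | Equ t u => Equ (tsubst s t) (tsubst s u)
  | Neg B => Neg (fsubst s B)
  | Conj B C => Conj (fsubst s B) (fsubst s C)
  | Disj B C => Disj (fsubst s B) (fsubst s C)
  | Impl B C => Impl (fsubst s B) (fsubst s C)
  end.

(** Simultaneous substitution [xs \ ts] (variables not in xs are unchanged). *)
Fixpoint vsubst (xs : list nat) (ts : list term) (y : nat) : term :=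
  match xs, ts with
  | x :: xs', t :: ts' => if Nat.eqb x y then t else vsubst xs' ts' y
  | _, _ => Var y
  end.

Definition big_conj (l : list formula) : formula := fold_right Conj FTop l.
Definition big_disj (l : list formula) : formula := fold_right Disj FBot l.

(** Semantics (normal models: = is interpreted as identity). *)
Fixpoint teval {D : Type} (I : Fn -> list D -> D) (v : nat -> D) (t : term) : D :=
  match t with
  | Var x => v x
  | App f l => I f (map (teval I v) l)
  end.

Fixpoint holds {D : Type} (I : Fn -> list D -> D) (J : Pr -> list D -> Prop)
    (v : nat -> D) (A : formula) : Prop :=
  match A with
  | FTop => True
  | FBot => False
  | Atom p l => J p (map (teval I v) l)
  | Equ t u => teval I v t = teval I v u
  | Neg B => ~ holds I J v B
  | Conj B C => holds I J v B /\ holds I J v C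
  | Disj B C => holds I J v B \/ holds I J v C
  | Impl B C => holds I J v B -> holds I J v C
  end.

(** A quantifier-free sequent Gamma |- Delta (formulas of our type are
    quantifier-free by construction); it is a quasi-tautology iff it is E-valid,
    i.e. its universal closure is valid in every structure, i.e. it holds in
    every structure under every valuation. *)
Definition quasi_tautology (Gamma Delta : list formula) : Prop :=
  forall (D : Type) (I : Fn -> list D -> D) (J : Pr -> list D -> Prop) (v : nat -> D),
    (forall A, In A Gamma -> holds I J v A) -> exists B, In B Delta /\ holds I J v B.

(** A block  forall xs F  (antecedent) or  exists xs F  (succedent). *)
Record block : Type := mkBlock { bvars : list nat; body : formula }.

(** Sigma_1-sequent  forall x1 F1, ..., forall xp Fp |- exists x(p+1) F(p+1), ..., exists xq Fq. *)
Record sigma1_sequent : Type := mkSeq { ante : list block; succ : list block }.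

Definition blocks (S : sigma1_sequent) : list block := ante S ++ succ S.

Definition sigma1_wf (S : sigma1_sequent) : Prop :=
  forall b, In b (blocks S) ->
    NoDup (bvars b) /\ (forall x, In x (fvars (body b)) -> In x (bvars b)).

(** An assignment of a finite set (list) of term vectors to each block;
    the first p entries belong to the antecedent blocks, the rest to the
    succedent blocks. *)
Definition term_sets := list (list (list term)).

Fixpoint zipWith {A B C : Type} (f : A -> B -> C) (l1 : list A) (l2 : list B) : list C :=
  match l1, l2 with
  | a :: l1', b :: l2' => f a b :: zipWith f l1' l2'
  | _, _ => []
  end.

Definition instances (b : block) (T : list (list term)) : list formula :=
  match bvars b with
  | [] => [body b]
  | _ => map (fun t => fsubst (vsubst (bvars b) t) (body b)) T
  end.

Definition inst_ante (S : sigma1_sequent) (T : term_sets) : list formula :=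
  concat (zipWith instances (ante S) (firstn (length (ante S)) T)).
Definition inst_succ (S : sigma1_sequent) (T : term_sets) : list formula :=
  concat (zipWith instances (succ S) (skipn (length (ante S)) T)).

Definition shaped (S : sigma1_sequent) (T : term_sets) : Prop :=
  Forall2 (fun b Ti => forall t, In t Ti -> length t = length (bvars b)) (blocks S) T.

Definition herbrand_structure (S : sigma1_sequent) (H : term_sets) : Prop :=
  shaped S H /\
  (forall Hi t u, In Hi H -> In t Hi -> In u t -> ground u) /\
  quasi_tautology (inst_ante S H) (inst_succ S H).

Record decomposition : Type :=
  mkDec { alphas : list nat; U : term_sets; W : list (list term) }.

Definition is_decomposition (S : sigma1_sequent) (H : term_sets) (Dc : decomposition) : Prop :=
  NoDup (alphas Dc) /\
  (forall a b, In a (alphas Dc) -> In b (blocks S) ->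
      ~ In a (bvars b) /\ ~ In a (fvars (body b))) /\
  shaped S (U Dc) /\
  (forall Ui u s x, In Ui (U Dc) -> In u Ui -> In s u -> In x (tvars s) -> In x (alphas Dc)) /\
  (forall w, In w (W Dc) -> length w = length (alphas Dc) /\ forall s, In s w -> ground s) /\
  (forall i b, nth_error (blocks S) i = Some b -> bvars b <> [] ->
     forall Hi Ui, nth_error H i = Some Hi -> nth_error (U Dc) i = Some Ui ->
     forall t, In t Hi <->
       exists u w, In u Ui /\ In w (W Dc) /\ t = map (tsubst (vsubst (alphas Dc) w)) u).

Definition Fl' (S : sigma1_sequent) (Dc : decomposition) : list formula := inst_ante S (U Dc).
Definition Fr' (S : sigma1_sequent) (Dc : decomposition) : list formula := inst_succ S (U Dc).

Definition ext_seq_inst_ante (S : sigma1_sequent) (Dc : decomposition) (A : formula)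
  : list formula :=
  Impl A (big_conj (map (fun w => fsubst (vsubst (alphas Dc) w) A) (W Dc))) :: Fl' S Dc.

Definition is_solution (S : sigma1_sequent) (Dc : decomposition) (A : formula) : Prop :=
  quasi_tautology (ext_seq_inst_ante S Dc A) (Fr' S Dc).

Definition canonical_formula (S : sigma1_sequent) (Dc : decomposition) : formula :=
  Conj (big_conj (Fl' S Dc)) (Neg (big_disj (Fr' S Dc))).

End FOL.

Arguments term : clear implicits.
Arguments formula : clear implicits.

(* Main.v *)
Require Import Defs.
From Stdlib Require Import List.
From Stdlib Require Import Arith Lia Classical.
Import ListNotations.

Section Proofs.
Context {Fn Pr : Type}.

Lemma term_ind' (P : term Fn -> Prop) :
  (forall x, P (Var x)) -> (forall f l, Forall P l -> P (App f l)) -> forall t, P t.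
Proof.
  intros HV HA. fix IH 1. intros [x|f l].
  - apply HV.
  - apply HA. revert l. fix IHl 1. intros [|a l]; constructor; [apply IH | apply IHl].
Defined.

Lemma teval_tsubst {D} (I : Fn -> list D -> D) v s (t : term Fn) :
  teval I v (tsubst s t) = teval I (fun x => teval I v (s x)) t.
Proof.
  induction t as [x|f l IH] using term_ind'; simpl; auto.
  f_equal. rewrite map_map. apply map_ext_in. intros a Ha.
  rewrite Forall_forall in IH; auto.
Qed.

Lemma teval_agree {D} (I : Fn -> list D -> D) v1 v2 (t : term Fn) :
  (forall x, In x (tvars t) -> v1 x = v2 x) -> teval I v1 t = teval I v2 t.
Proof.
  induction t as [x|f l IH] using term_ind'; simpl; intros Hag.
  - apply Hag; auto.
  - f_equal. apply map_ext_in. intros a Ha.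
    rewrite Forall_forall in IH. apply IH; auto.
    intros x Hx. apply Hag. apply in_concat. exists (tvars a). split; auto.
    apply in_map; auto.
Qed.

Lemma tvars_tsubst s (t : term Fn) x :
  In x (tvars (tsubst s t)) -> exists y, In y (tvars t) /\ In x (tvars (s y)).
Proof.
  induction t as [z|f l IH] using term_ind'; simpl; intros Hx.
  - exists z; auto.
  - apply in_concat in Hx. destruct Hx as [L [HL Hx]].
    rewrite map_map in HL. apply in_map_iff in HL. destruct HL as [a [<- Ha]].
    rewrite Forall_forall in IH. destruct (IH a Ha Hx) as [y [Hy1 Hy2]].
    exists y. split; auto. apply in_concat. exists (tvars a). split; auto.
    apply in_map; auto.
Qed.

Lemma holds_fsubst {D} (I : Fn -> list D -> D) (J : Pr -> list D -> Prop) v s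
  (A : formula Fn Pr) :
  holds I J v (fsubst s A) <-> holds I J (fun x => teval I v (s x)) A.
Proof.
  induction A; simpl; try tauto.
  - rewrite map_map. erewrite map_ext; [reflexivity|]. intros; apply teval_tsubst.
  - rewrite !teval_tsubst. tauto.
Qed.

Lemma holds_agree {D} (I : Fn -> list D -> D) (J : Pr -> list D -> Prop) v1 v2
  (A : formula Fn Pr) :
  (forall x, In x (fvars A) -> v1 x = v2 x) -> (holds I J v1 A <-> holds I J v2 A).
Proof.
  induction A as [| |p l|t t0|A IHA|A1 IHA1 A2 IHA2|A1 IHA1 A2 IHA2|A1 IHA1 A2 IHA2];
    simpl; intros Hag; try tauto.
  - erewrite map_ext_in; [reflexivity|]. intros a Ha. apply teval_agree.
    intros x Hx. apply Hag. apply in_concat. exists (tvars a). split; auto.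
    apply in_map; auto.
  - rewrite (teval_agree I v1 v2 t), (teval_agree I v1 v2 t0); try tauto;
      intros; apply Hag; apply in_or_app; auto.
  - rewrite IHA1, IHA2; try tauto; intros; apply Hag; apply in_or_app; auto.
  - rewrite IHA1, IHA2; try tauto; intros; apply Hag; apply in_or_app; auto.
  - rewrite IHA1, IHA2; try tauto; intros; apply Hag; apply in_or_app; auto.
Qed.

Lemma fvars_fsubst s (A : formula Fn Pr) x :
  In x (fvars (fsubst s A)) -> exists y, In y (fvars A) /\ In x (tvars (s y)).
Proof.
  induction A as [| |p l|t t0|A IHA|A1 IHA1 A2 IHA2|A1 IHA1 A2 IHA2|A1 IHA1 A2 IHA2];
    simpl; intros Hx; try contradiction.
  - apply in_concat in Hx. destruct Hx as [L [HL Hx]].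
    rewrite map_map in HL. apply in_map_iff in HL. destruct HL as [a [<- Ha]].
    destruct (tvars_tsubst s a x Hx) as [y [Hy1 Hy2]].
    exists y. split; auto. apply in_concat. exists (tvars a). split; auto.
    apply in_map; auto.
  - apply in_app_or in Hx. destruct Hx as [Hx|Hx];
      destruct (tvars_tsubst _ _ _ Hx) as [y [Hy1 Hy2]]; exists y; split; auto;
      apply in_or_app; auto.
  - auto.
  - apply in_app_or in Hx. destruct Hx as [Hx|Hx];
      [destruct (IHA1 Hx) as [y [? ?]] | destruct (IHA2 Hx) as [y [? ?]]];
      exists y; split; auto; apply in_or_app; auto.
  - apply in_app_or in Hx. destruct Hx as [Hx|Hx];
      [destruct (IHA1 Hx) as [y [? ?]] | destruct (IHA2 Hx) as [y [? ?]]];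
      exists y; split; auto; apply in_or_app; auto.
  - apply in_app_or in Hx. destruct Hx as [Hx|Hx];
      [destruct (IHA1 Hx) as [y [? ?]] | destruct (IHA2 Hx) as [y [? ?]]];
      exists y; split; auto; apply in_or_app; auto.
Qed.

Lemma big_conj_holds {D} (I : Fn -> list D -> D) (J : Pr -> list D -> Prop) v
  (l : list (formula Fn Pr)) :
  holds I J v (big_conj l) <-> forall A, In A l -> holds I J v A.
Proof.
  induction l; simpl. - split; auto; contradiction.
  - rewrite IHl. split. + intros [H1 H2] A [<-|HA]; auto.
    + intros HH; split; auto.
Qed.

Lemma big_disj_holds {D} (I : Fn -> list D -> D) (J : Pr -> list D -> Prop) v
  (l : list (formula Fn Pr)) :
  holds I J v (big_disj l) <-> exists A, In A l /\ holds I J v A.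
Proof.
  induction l; simpl. - split; [contradiction| intros [? [[] _]]].
  - rewrite IHl. split. + intros [H1|[A [H2 H3]]]; eauto.
    + intros [A [[<-|HA] HH]]; eauto.
Qed.

Lemma fvars_big_conj (l : list (formula Fn Pr)) x :
  In x (fvars (big_conj l)) -> exists A, In A l /\ In x (fvars A).
Proof.
  induction l; simpl; intros Hx; [contradiction|].
  apply in_app_or in Hx. destruct Hx as [Hx|Hx]; eauto.
  destruct (IHl Hx) as [A [? ?]]; eauto.
Qed.

Lemma fvars_big_disj (l : list (formula Fn Pr)) x :
  In x (fvars (big_disj l)) -> exists A, In A l /\ In x (fvars A).
Proof.
  induction l; simpl; intros Hx; [contradiction|].
  apply in_app_or in Hx. destruct Hx as [Hx|Hx]; eauto.
  destruct (IHl Hx) as [A [? ?]]; eauto.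
Qed.

Lemma vsubst_map (f : term Fn -> term Fn) xs u x :
  length u = length xs -> In x xs -> vsubst xs (map f u) x = f (vsubst xs u x).
Proof.
  revert u; induction xs as [|a xs IH]; intros [|t u]; simpl; intros Hl Hx;
    try discriminate; try contradiction.
  destruct (Nat.eqb a x) eqn:E; auto. apply IH; [lia|].
  destruct Hx as [->|Hx]; auto. rewrite Nat.eqb_refl in E; discriminate.
Qed.

Lemma vsubst_mem xs (u : list (term Fn)) x :
  length u = length xs -> In x xs -> In (vsubst xs u x) u.
Proof.
  revert u; induction xs as [|a xs IH]; intros [|t u]; simpl; intros Hl Hx;
    try discriminate; try contradiction.
  destruct (Nat.eqb a x) eqn:E; auto. right. apply IH; [lia|].
  destruct Hx as [->|Hx]; auto. rewrite Nat.eqb_refl in E; discriminate.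
Qed.

End Proofs.

Lemma in_concat_zip {B X Y} (f : B -> X -> list Y) bs Us A :
  In A (concat (zipWith f bs Us)) ->
  exists i b Ui, nth_error bs i = Some b /\ nth_error Us i = Some Ui /\ In A (f b Ui).
Proof.
  revert Us; induction bs as [|b bs IH]; intros [|u Us]; simpl; intros HA;
    try contradiction.
  apply in_app_or in HA. destruct HA as [HA|HA].
  - exists 0, b, u; auto.
  - destruct (IH Us HA) as (i&b'&Ui&E1&E2&E3). exists (S i), b', Ui; auto.
Qed.

Lemma concat_zip_in {B X Y} (f : B -> X -> list Y) bs Us A i b Ui :
  nth_error bs i = Some b -> nth_error Us i = Some Ui -> In A (f b Ui) ->
  In A (concat (zipWith f bs Us)).
Proof.
  revert Us i; induction bs as [|b0 bs IH]; intros [|u Us] [|i]; simpl; intros E1 E2 HA;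
    try discriminate.
  - inversion E1; inversion E2; subst. apply in_or_app; auto.
  - apply in_or_app; right. eapply IH; eauto.
Qed.

Lemma concat_zip_corr {B X Y} (f : B -> X -> list Y) (R : Y -> Y -> Prop) bs Hs Us :
  length Hs = length Us ->
  (forall i b Hi Ui, nth_error bs i = Some b -> nth_error Hs i = Some Hi ->
     nth_error Us i = Some Ui -> forall A, In A (f b Hi) ->
     exists A', In A' (f b Ui) /\ R A A') ->
  forall A, In A (concat (zipWith f bs Hs)) ->
  exists A', In A' (concat (zipWith f bs Us)) /\ R A A'.
Proof.
  intros Hl Hc A HA. apply in_concat_zip in HA as (i&b&Hi&E1&E2&HA).
  destruct (nth_error Us i) as [Ui|] eqn:E3.
  - destruct (Hc i b Hi Ui E1 E2 E3 A HA) as (A'&HA'&HR). exists A'; split; auto.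
    eapply concat_zip_in; eauto.
  - exfalso. apply nth_error_None in E3.
    assert (i < length Hs) by (apply nth_error_Some; congruence). lia.
Qed.

Lemma Forall2_nth {A B} (P : A -> B -> Prop) l1 l2 i a b :
  Forall2 P l1 l2 -> nth_error l1 i = Some a -> nth_error l2 i = Some b -> P a b.
Proof.
  intros HF; revert i; induction HF; intros [|i]; simpl; intros E1 E2; try discriminate.
  - inversion E1; inversion E2; subst; auto.
  - eauto.
Qed.

Lemma nth_firstn {A} p (L : list A) i x :
  nth_error (firstn p L) i = Some x -> nth_error L i = Some x.
Proof.
  revert L i; induction p; intros [|a L] [|i]; simpl; intros E; try discriminate; auto.
Qed.

Lemma nth_skipn {A} p (L : list A) i :
  nth_error (skipn p L) i = nth_error L (p + i).
Proof.
  revert L; induction p; intros [|a L]; simpl; auto. destruct i; auto.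
Qed.

Lemma block_fvars {Fn Pr} (b : @block Fn Pr) Ui (al : list nat) :
  (forall x, In x (fvars (body b)) -> In x (bvars b)) ->
  (forall u, In u Ui -> length u = length (bvars b)) ->
  (forall u s x, In u Ui -> In s u -> In x (tvars s) -> In x al) ->
  forall A, In A (instances b Ui) -> forall x, In x (fvars A) -> In x al.
Proof.
  intros hc hs hv A HA x Hx. unfold instances in HA.
  destruct (bvars b) as [|n l] eqn:E.
  - destruct HA as [<-|[]]. apply hc in Hx. destruct Hx.
  - apply in_map_iff in HA. destruct HA as [u [<- Hu]].
    apply fvars_fsubst in Hx. destruct Hx as [y [Hy Hxy]].
    apply (hv u (vsubst (n :: l) u y) x Hu); auto.
    apply vsubst_mem; auto.
Qed.

Lemma block_corr {Fn Pr D} (I : Fn -> list D -> D) (J : Pr -> list D -> Prop)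
  (v : nat -> D) (b : @block Fn Pr) Hi Ui al W :
  (forall x, In x (fvars (body b)) -> In x (bvars b)) ->
  (forall u, In u Ui -> length u = length (bvars b)) ->
  (bvars b <> [] -> forall t, In t Hi ->
     exists u w, In u Ui /\ In w W /\ t = map (tsubst (vsubst al w)) u) ->
  forall A, In A (instances b Hi) ->
  exists A', In A' (instances b Ui) /\
    exists v', (v' = v \/ exists w, In w W /\ v' = fun x => teval I v (vsubst al w x)) /\
      (holds I J v A <-> holds I J v' A').
Proof.
  intros hc hs hd A HA. unfold instances in *.
  destruct (bvars b) as [|n l] eqn:E.
  - destruct HA as [<-|[]]. exists (body b). split. left; auto.
    exists v; split; auto. tauto.
  - apply in_map_iff in HA. destruct HA as [t [<- Ht]].
    destruct (hd ltac:(discriminate) t Ht) as [u [w [Hu [Hw ->]]]].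
    exists (fsubst (vsubst (n :: l) u) (body b)). split. apply in_map_iff; exists u; auto.
    exists (fun x => teval I v (vsubst al w x)). split. right; eauto.
    rewrite !holds_fsubst. apply holds_agree. intros x Hx.
    specialize (hc x Hx).
    rewrite vsubst_map; auto.
    rewrite teval_tsubst. reflexivity.
Qed.

Theorem mainTheorem1 (Fn Pr : Type) (S : @sigma1_sequent Fn Pr)
    (H : @term_sets Fn) (Dc : @decomposition Fn) :
  sigma1_wf S ->
  herbrand_structure S H ->
  is_decomposition S H Dc ->
  (forall x, In x (fvars (canonical_formula S Dc)) -> In x (alphas Dc)) /\
  is_solution S Dc (canonical_formula S Dc).
Proof.
  intros Hwf [HshH [Hgr HQ]] [Hnd [Hfresh [HshU [HvU [HW Hdec]]]]].
  set (p := length (ante S)).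
  assert (Hblk : forall j b Ui, nth_error (blocks S) j = Some b ->
     nth_error (U Dc) j = Some Ui ->
     (forall x, In x (fvars (body b)) -> In x (bvars b)) /\
     (forall u, In u Ui -> length u = length (bvars b)) /\
     (forall u s x, In u Ui -> In s u -> In x (tvars s) -> In x (alphas Dc))).
  { intros j b Ui E1 E2. split; [|split].
    - apply (proj2 (Hwf b (nth_error_In _ _ E1))).
    - exact (Forall2_nth _ _ _ _ _ _ HshU E1 E2).
    - intros u s x Hu Hs Hx. eapply HvU; eauto. eapply nth_error_In; eauto. }
  assert (Hante : forall {A} (L : list A) i b x, nth_error (ante S) i = Some b ->
     nth_error (firstn p L) i = Some x ->
     nth_error (blocks S) i = Some b /\ nth_error L i = Some x).
  { intros A L i b x E1 E2. split; [|eapply nth_firstn; eauto].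
    unfold blocks. rewrite nth_error_app1; auto. apply nth_error_Some; congruence. }
  assert (Hsucc : forall {A} (L : list A) i b x, nth_error (succ S) i = Some b ->
     nth_error (skipn p L) i = Some x ->
     nth_error (blocks S) (p + i) = Some b /\ nth_error L (p + i) = Some x).
  { intros A L i b x E1 E2. rewrite nth_skipn in E2. split; auto.
    unfold blocks. rewrite nth_error_app2 by (unfold p; lia).
    replace (p + i - length (ante S)) with i by (unfold p; lia). auto. }
  pose proof (Forall2_length HshH) as HlH.
  pose proof (Forall2_length HshU) as HlU.
  split.
  - intros x Hx. unfold canonical_formula in Hx. simpl in Hx.
    apply in_app_or in Hx. destruct Hx as [Hx|Hx].
    + apply fvars_big_conj in Hx. destruct Hx as [A [HA Hx]].
      unfold Fl', inst_ante in HA. apply in_concat_zip in HA as (i&b&Ui&E1&E2&HA).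
      destruct (Hante _ _ _ _ _ E1 E2) as [E3 E4].
      destruct (Hblk _ _ _ E3 E4) as (h1&h2&h3).
      eapply block_fvars; eauto.
    + apply fvars_big_disj in Hx. destruct Hx as [A [HA Hx]].
      unfold Fr', inst_succ in HA. apply in_concat_zip in HA as (i&b&Ui&E1&E2&HA).
      destruct (Hsucc _ _ _ _ _ E1 E2) as [E3 E4].
      destruct (Hblk _ _ _ E3 E4) as (h1&h2&h3).
      eapply block_fvars; eauto.
  - unfold is_solution, quasi_tautology. intros D I J v Hant.
    destruct (classic (exists B, In B (Fr' S Dc) /\ holds I J v B)) as [|Hno]; auto.
    exfalso.
    assert (HFl : forall A, In A (Fl' S Dc) -> holds I J v A)
      by (intros; apply Hant; right; auto).
    assert (HC : holds I J v (canonical_formula S Dc)).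
    { unfold canonical_formula. cbn [holds]. split.
      - apply big_conj_holds; auto.
      - rewrite big_disj_holds. auto. }
    assert (HI : holds I J v (big_conj (map (fun w => fsubst (vsubst (alphas Dc) w)
       (canonical_formula S Dc)) (W Dc)))) by exact (Hant _ (or_introl eq_refl) HC).
    rewrite big_conj_holds in HI.
    set (V := fun v' : nat -> D => v' = v \/ exists w, In w (W Dc) /\
                 v' = (fun x => teval I v (vsubst (alphas Dc) w x))).
    assert (Hgood : forall v', V v' ->
      (forall A, In A (Fl' S Dc) -> holds I J v' A) /\
      (forall B, In B (Fr' S Dc) -> ~ holds I J v' B)).
    { intros v' [->|[w [Hw ->]]].
      - split; auto. intros B HB HBh; apply Hno; eauto.
      - assert (Hc := HI _ (in_map _ _ _ Hw)). rewrite holds_fsubst in Hc.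
        unfold canonical_formula in Hc. cbn [holds] in Hc. destruct Hc as [Hc1 Hc2].
        rewrite big_conj_holds in Hc1. rewrite big_disj_holds in Hc2.
        split; auto. intros B HB HBh; apply Hc2; eauto. }
    assert (Hca : forall A, In A (inst_ante S H) -> exists A', In A' (Fl' S Dc) /\
       exists v', V v' /\ (holds I J v A <-> holds I J v' A')).
    { intros A HA. unfold Fl', inst_ante in *.
      eapply (concat_zip_corr instances
        (fun A A' => exists v', V v' /\ (holds I J v A <-> holds I J v' A')));
        [ | | exact HA].
      - rewrite !length_firstn. congruence.
      - intros i b Hi Ui E1 E2 E3 A0 HA0.
        destruct (Hante _ _ _ _ _ E1 E2) as [Eb EH].
        destruct (Hante _ _ _ _ _ E1 E3) as [_ EU].
        destruct (Hblk _ _ _ Eb EU) as (h1&h2&h3).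
        eapply block_corr; eauto.
        intros hne t Ht. apply (Hdec i b Eb hne Hi Ui EH EU t); auto. }
    assert (Hcs : forall A, In A (inst_succ S H) -> exists A', In A' (Fr' S Dc) /\
       exists v', V v' /\ (holds I J v A <-> holds I J v' A')).
    { intros A HA. unfold Fr', inst_succ in *.
      eapply (concat_zip_corr instances
        (fun A A' => exists v', V v' /\ (holds I J v A <-> holds I J v' A')));
        [ | | exact HA].
      - rewrite !length_skipn. congruence.
      - intros i b Hi Ui E1 E2 E3 A0 HA0.
        destruct (Hsucc _ _ _ _ _ E1 E2) as [Eb EH].
        destruct (Hsucc _ _ _ _ _ E1 E3) as [_ EU].
        destruct (Hblk _ _ _ Eb EU) as (h1&h2&h3).
        eapply block_corr; eauto.
        intros hne t Ht. apply (Hdec (p + i) b Eb hne Hi Ui EH EU t); auto. }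
    destruct (HQ D I J v) as [B [HB HBh]].
    + intros A HA. destruct (Hca A HA) as [A' [HA' [v' [HV Hiff]]]].
      apply Hiff. apply (proj1 (Hgood v' HV)); auto.
    + destruct (Hcs B HB) as [B' [HB' [v' [HV Hiff]]]].
      apply (proj2 (Hgood v' HV) B' HB'). apply Hiff; auto.
Qed.
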